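(* There is an absolute constant $C>0$ such that the following holds. Let $U^*,S,p_{ijk},\widehat p_{ijk},\mathcal{W}_{ijk},\delta_{ijk}$ be as in the context, and let $U\in\mathbb{R}^{n\times r}$ be fixed (independent of $\delta$) with unit-norm columns and $|U_{il}|\le2\|(U^* )^i\|$ for all $i,l$. Fix $q\in[r]$ and unit vectors $a,b,c\in\mathbb{R}^n$ with $|a_i|,|b_i|,|c_i|\le2\|(U^* )^i\|$ for all $i$. Let $B,R$ be the $n\times n$ diagonal matrices with $B_{ii}=\sum_{j,k}\delta_{ijk}\mathcal{W}_{ijk}U_{jq}^2U_{kq}^2$ and $R_{ii}=\sum_{j,k}\delta_{ijk}\mathcal{W}_{ijk}U_{jq}U_{kq}a_jb_k$. Let $\gamma\in(0,1]$. If $m\ge\frac{C}{\gamma^2}n\log(n)S^2$, then with probability at least $1-2n^{-9}$, $$\big\|(\langle U_q,a\rangle\langle U_q,b\rangle B-R)c\big\|\le\gamma\|b\|.$$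
   Context: $U^*\in\mathbb{R}^{n\times r}$ has orthonormal columns $U^*_l$ and rows $(U^* )^i$; $S=\sum_i\|(U^* )^i\|^{3/2}$; $p_{ijk}=\frac{\|(U^* )^i\|^{3/2}\|(U^* )^j\|^{3/2}+\|(U^* )^j\|^{3/2}\|(U^* )^k\|^{3/2}+\|(U^* )^k\|^{3/2}\|(U^* )^i\|^{3/2}}{3nS^2}$; $\widehat p_{ijk}=\min\{mp_{ijk},1\}$; $\mathcal{W}_{ijk}=1/\widehat p_{ijk}$ if $\widehat p_{ijk}>0$, else $0$; $\delta_{ijk}$ are independent Bernoulli$(\widehat p_{ijk})$ random variables. *)

(* Defs.v *)
From Stdlib Require Import Reals ClassicalEpsilon.
From mathcomp Require Import all_boot.
Set Implicit Arguments. Unset Strict Implicit. Unset Printing Implicit Defensive.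

Local Open Scope R_scope.


Section Defs.
Variables (n r : nat).
Implicit Types (Ustar U : 'I_n -> 'I_r -> R) (x : 'I_n -> R).

Definition vnorm x : R := sqrt (\big[Rplus/R0]_(i : 'I_n) (x i)^2).

Definition orthonormal_cols Ustar : Prop :=
  forall l l' : 'I_r,
    \big[Rplus/R0]_(i : 'I_n) (Ustar i l * Ustar i l') = if l == l' then 1 else 0.

Definition rownorm Ustar (i : 'I_n) : R := sqrt (\big[Rplus/R0]_(l : 'I_r) (Ustar i l)^2).

(* ||U*^i||^{3/2}  (= (sqrt x)^3 for x >= 0) *)
Definition w32 Ustar (i : 'I_n) : R := (sqrt (rownorm Ustar i))^3.

Definition Ssum Ustar : R := \big[Rplus/R0]_(i : 'I_n) w32 Ustar i.

Definition pijk Ustar (i j k : 'I_n) : R :=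
  (w32 Ustar i * w32 Ustar j + w32 Ustar j * w32 Ustar k + w32 Ustar k * w32 Ustar i)
  / (3 * INR n * (Ssum Ustar)^2).

Definition phat Ustar (m : R) (i j k : 'I_n) : R := Rmin (m * pijk Ustar i j k) 1.

Definition Wgt Ustar (m : R) (i j k : 'I_n) : R :=
  if Rlt_dec 0 (phat Ustar m i j k) then / phat Ustar m i j k else 0.

(* a realisation of the independent Bernoulli variables delta_{ijk} *)
Definition sample := {ffun 'I_n * 'I_n * 'I_n -> bool}.

Definition delta (d : sample) (i j k : 'I_n) : R := if d (i, j, k) then 1 else 0.

Definition sample_prob Ustar (m : R) (d : sample) : R :=
  \big[Rmult/R1]_(t : 'I_n * 'I_n * 'I_n)
     (let: (i, j, k) := t in
      if d t then phat Ustar m i j k else 1 - phat Ustar m i j k).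

Definition Prob Ustar (m : R) (E : sample -> Prop) : R :=
  \big[Rplus/R0]_(d : sample)
     (if excluded_middle_informative (E d) then sample_prob Ustar m d else 0).

Definition Bdiag Ustar m U (q : 'I_r) (d : sample) (i : 'I_n) : R :=
  \big[Rplus/R0]_(j : 'I_n) \big[Rplus/R0]_(k : 'I_n)
     (delta d i j k * Wgt Ustar m i j k * (U j q)^2 * (U k q)^2).

Definition Rdiag Ustar m U (q : 'I_r) x y (d : sample) (i : 'I_n) : R :=
  \big[Rplus/R0]_(j : 'I_n) \big[Rplus/R0]_(k : 'I_n)
     (delta d i j k * Wgt Ustar m i j k * U j q * U k q * x j * y k).

Definition colinner U (q : 'I_r) x : R := \big[Rplus/R0]_(i : 'I_n) (U i q * x i).

End Defs.

(* Main.v *)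
Set Warnings "-notation-overridden -redundant-canonical-projection".
Require Import Defs.
From Stdlib Require Import Reals Lra ClassicalEpsilon.
From HB Require Import structures.
From mathcomp Require Import all_boot.
Set Implicit Arguments. Unset Strict Implicit. Unset Printing Implicit Defensive.
Local Open Scope R_scope.


Lemma RplusA : associative Rplus. Proof. move=> *; symmetry; apply Rplus_assoc. Qed.
Lemma RmultA : associative Rmult. Proof. move=> *; symmetry; apply Rmult_assoc. Qed.
HB.instance Definition _ := Monoid.isComLaw.Build R R0 Rplus RplusA Rplus_comm Rplus_0_l.
HB.instance Definition _ := Monoid.isComLaw.Build R R1 Rmult RmultA Rmult_comm Rmult_1_l.
HB.instance Definition _ := Monoid.isMulLaw.Build R R0 Rmult Rmult_0_l Rmult_0_r.
HB.instance Definition _ := Monoid.isAddLaw.Build R Rmult Rplus Rmult_plus_distr_r Rmult_plus_distr_l.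

Section Gen.
Variable I : finType.

Lemma sum_le (F G : I -> R) : (forall i, F i <= G i) ->
  \big[Rplus/R0]_i F i <= \big[Rplus/R0]_i G i.
Proof. move=> H; apply: (big_ind2 (fun a b => a <= b)) => //; [lra| move=> *; lra]. Qed.

Lemma sum_ge0 (F : I -> R) : (forall i, 0 <= F i) -> 0 <= \big[Rplus/R0]_i F i.
Proof. move=> H; apply: (big_ind (fun a => 0 <= a)) => //; [lra| move=> *; lra]. Qed.

Lemma prod_ge0 (F : I -> R) : (forall i, 0 <= F i) -> 0 <= \big[Rmult/R1]_i F i.
Proof. move=> H; apply: (big_ind (fun a => 0 <= a)) => //; [lra| move=> *; nra]. Qed.

Lemma prod_le (F G : I -> R) : (forall i, 0 <= F i <= G i) ->
  \big[Rmult/R1]_i F i <= \big[Rmult/R1]_i G i.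
Proof.
move=> H; suff: 0 <= \big[Rmult/R1]_i F i <= \big[Rmult/R1]_i G i by case.
apply: (big_ind2 (fun a b => 0 <= a <= b)) => //; first lra.
move=> x1 x2 y1 y2 [? ?] [? ?]; split; nra.
Qed.


Lemma sum_ge0_P (P : pred I) (F : I -> R) : (forall i, 0 <= F i) -> 0 <= \big[Rplus/R0]_(i | P i) F i.
Proof. move=> H; apply: (big_ind (fun a => 0 <= a)) => //; [lra| move=> *; lra]. Qed.

Lemma term_le_sum (F : I -> R) i : (forall i, 0 <= F i) -> F i <= \big[Rplus/R0]_i F i.
Proof. move=> H; rewrite (bigD1 i) //=; have := sum_ge0_P (fun j => j != i) H; lra. Qed.

Lemma exp_sum (F : I -> R) : exp (\big[Rplus/R0]_i F i) = \big[Rmult/R1]_i exp (F i).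
Proof. apply: (big_morph exp) => //; [exact: exp_plus | exact: exp_0]. Qed.

Lemma sum_const_R (c : R) : \big[Rplus/R0]_(i : I) c = INR #|I| * c.
Proof.
rewrite big_const; elim: #|I| => [|k IH]; first (simpl; lra).
rewrite S_INR /= IH; ring.
Qed.

Lemma sum_distrl (F : I -> R) c : \big[Rplus/R0]_i F i * c = \big[Rplus/R0]_i (F i * c).
Proof. by rewrite big_distrl. Qed.
End Gen.

Section Prob.
Variable T : finType.
Variable pr : T -> R.
Hypothesis pr01 : forall t, 0 <= pr t <= 1.

Definition sp (d : {ffun T -> bool}) := \big[Rmult/R1]_t (if d t then pr t else 1 - pr t).

Lemma sp_ge0 d : 0 <= sp d.
Proof. apply: prod_ge0 => t; have := pr01 t; case: (d t); lra. Qed.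

Lemma factor (f : T -> bool -> R) :
  \big[Rplus/R0]_d (sp d * \big[Rmult/R1]_t f t (d t)) =
  \big[Rmult/R1]_t (pr t * f t true + (1 - pr t) * f t false).
Proof.
have -> : \big[Rmult/R1]_t (pr t * f t true + (1 - pr t) * f t false) =
   \big[Rmult/R1]_t \big[Rplus/R0]_(b : bool) ((if b then pr t else 1 - pr t) * f t b).
  by apply: eq_bigr => t _; rewrite big_bool.
rewrite bigA_distr_bigA; apply: eq_bigr => d _.
by rewrite /sp -big_split.
Qed.

Lemma sp_total : \big[Rplus/R0]_d sp d = 1.
Proof.
have := factor (fun _ _ => 1).
have -> : \big[Rmult/R1]_t (pr t * 1 + (1 - pr t) * 1) = \big[Rmult/R1]_(t : T) 1.
  by apply: eq_bigr => t _; ring.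
rewrite big1_eq; change 1 with R1 => <-; apply: eq_bigr => d _.
by rewrite Rmult_1_r.
Qed.

Definition PG (E : {ffun T -> bool} -> Prop) :=
  \big[Rplus/R0]_d (if excluded_middle_informative (E d) then sp d else 0).

Lemma PG_le (E F : {ffun T -> bool} -> Prop) : (forall d, E d -> F d) -> PG E <= PG F.
Proof.
move=> H; apply: sum_le => d.
have := sp_ge0 d.
case: excluded_middle_informative => e /=; case: excluded_middle_informative => f /=; try lra.
by move=> _; exfalso; firstorder.
Qed.

Lemma PG_ge0 E : 0 <= PG E.
Proof. apply: sum_ge0 => d; case: excluded_middle_informative => _ /=; have := sp_ge0 d; lra. Qed.

Lemma PG_compl E : PG E = 1 - PG (fun d => ~ E d).
Proof.
suff : PG E + PG (fun d => ~ E d) = 1 by lra.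
rewrite -(sp_total) /PG -big_split /=.
apply: eq_bigr => d _.
case: excluded_middle_informative => e /=; case: excluded_middle_informative => f /=; try tauto; ring.
Qed.

Lemma PG_or E F : PG (fun d => E d \/ F d) <= PG E + PG F.
Proof.
rewrite /PG -big_split; apply: sum_le => d /=.
have := sp_ge0 d.
do 3 case: excluded_middle_informative => ? /= /=; try tauto; lra.
Qed.

Lemma PG_union (J : finType) (E : J -> {ffun T -> bool} -> Prop) :
  PG (fun d => exists j, E j d) <= \big[Rplus/R0]_j PG (E j).
Proof.
rewrite /PG exchange_big; apply: sum_le => d /=.
case: excluded_middle_informative => HH /=; last first.
  by apply: sum_ge0 => j; case: excluded_middle_informative => _ /=; have := sp_ge0 d; lra.
case: HH => j Hj.
apply: Rle_trans (term_le_sum j _).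
  by case: excluded_middle_informative => /= //; lra.
by move=> i; case: excluded_middle_informative => _ /=; have := sp_ge0 d; lra.
Qed.

Lemma markov (Z : {ffun T -> bool} -> R) lam g : 0 <= lam ->
  PG (fun d => g <= Z d) <= exp (- (lam * g)) * \big[Rplus/R0]_d (sp d * exp (lam * Z d)).
Proof.
move=> hl; rewrite big_distrr; apply: sum_le => d /=.
have h1 := sp_ge0 d; have h2 := exp_pos (- (lam * g)); have h3 := exp_pos (lam * Z d).
case: excluded_middle_informative => h /=.
  have : 1 <= exp (- (lam * g)) * exp (lam * Z d).
    rewrite -exp_plus; have := exp_ineq1_le (- (lam * g) + lam * Z d); nra.
  move=> h4; rewrite -Rmult_assoc (Rmult_comm _ (sp d)) Rmult_assoc; nra.
apply: Rmult_le_pos; [lra|apply: Rmult_le_pos; lra].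
Qed.
End Prob.
Lemma abs_le_inv a b : Rabs a <= b -> -b <= a <= b.
Proof. rewrite /Rabs; case: Rcase_abs => ? ?; lra. Qed.
Lemma exp_le_exp_compat x y : x <= y -> exp x <= exp y.
Proof. case/Rle_lt_or_eq_dec => [h|->]; [apply/Rlt_le/exp_increasing/h|lra]. Qed.

Lemma exp_quad y : Rabs y <= 1 -> exp y <= 1 + y + 2 * y^2.
Proof.
move=> hy.
have habs := abs_le_inv hy.
destruct (Rle_or_lt y 0) as [hn|hp].
  have e1 := exp_ineq1_le (- y).
  have e2 : exp y * exp (- y) = 1 by rewrite -exp_plus Rplus_opp_r exp_0.
  have e3 := exp_pos y.
  have e4 : exp y * (1 - y) <= 1 by nra.
  have e5 : 1 <= (1 + y + 2 * y^2) * (1 - y) by nra.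
  nra.
have e1 := exp_ineq1_le (- (y/2)).
have e2 : exp (y/2) * exp (- (y/2)) = 1 by rewrite -exp_plus Rplus_opp_r exp_0.
have e3 := exp_pos (y/2).
have e4 : exp (y/2) * (1 - y/2) <= 1 by nra.
have e6 : exp y = exp (y/2) * exp (y/2) by rewrite -exp_plus; f_equal; field.
have e5' : 0 <= y^2 * ((5 - 2*y)*(1-y)).
  apply: Rmult_le_pos; [apply: pow2_ge_0| apply: Rmult_le_pos; lra].
have e5 : 1 <= (1 + y + 2 * y^2) * ((1 - y/2) * (1 - y/2)) by nra.
have e7 : exp y * ((1 - y/2) * (1 - y/2)) <= 1.
  have e9 : 0 <= exp (y/2) * (1 - y/2) by apply: Rmult_le_pos; lra.
  have e10 : (exp (y/2) * (1 - y/2)) * (exp (y/2) * (1 - y/2)) <= 1 by nra.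
  rewrite e6; lra.
have e8 : 0 < (1 - y/2) * (1 - y/2) by nra.
nra.
Qed.

Definition Wof (p : R) := if Rlt_dec 0 p then / p else 0.

Lemma bern p x lam q : 0 <= p <= 1 -> (p = 0 -> x = 0) ->
  (0 < p < 1 -> Rabs (lam * x) <= p /\ 1 <= p * q) -> 0 <= q ->
  p * exp (lam * (Wof p * x)) + (1 - p) <= exp (lam * x + 2 * lam^2 * x^2 * q).
Proof.
move=> hp h0 h1 hq.
have hpos : 0 <= 2 * lam^2 * x^2 * q.
  have hl1 := pow2_ge_0 lam; have hl2 := pow2_ge_0 x.
  apply: Rmult_le_pos; last lra. apply: Rmult_le_pos; last lra. lra.
destruct (Req_dec p 0) as [e|ne].
  rewrite e h0 // Rmult_0_l Rminus_0_r (_ : lam * 0 + 2 * lam ^ 2 * 0 ^ 2 * q = 0); last ring.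
  rewrite exp_0; lra.
destruct (Req_dec p 1) as [e1|ne1].
  rewrite e1 /Wof; destruct (Rlt_dec _ _); last lra.
  rewrite Rinv_1 Rmult_1_l Rmult_1_l Rminus_diag Rplus_0_r.
  apply: exp_le_exp_compat; lra.
have hp' : 0 < p < 1 by lra.
case: (h1 hp') => ha hq1.
rewrite /Wof; destruct (Rlt_dec _ _); last lra.
set y := lam * (/ p * x).
have hy : Rabs y <= 1.
  rewrite /y (_ : lam * (/p * x) = (lam * x) * / p); last by ring.
  rewrite Rabs_mult Rabs_inv (Rabs_pos_eq p); last lra.
  have hip : 0 < / p by apply: Rinv_0_lt_compat; lra.
  have : Rabs (lam * x) * / p <= p * / p by apply: Rmult_le_compat_r; lra.
  rewrite Rinv_r; lra.
have := exp_quad hy.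
have e : p * (1 + y + 2 * y^2) + (1 - p) = 1 + lam * x + 2 * lam^2 * x^2 * / p.
  by rewrite /y; field; lra.
have hq2 : 2 * lam^2 * x^2 * / p <= 2 * lam^2 * x^2 * q.
  apply: Rmult_le_compat_l; first (have := pow2_ge_0 lam; have := pow2_ge_0 x; nra).
  apply: (Rmult_le_reg_l p); first lra. rewrite Rinv_r; lra.
have := exp_ineq1_le (lam * x + 2 * lam ^ 2 * x ^ 2 * q).
nra.
Qed.


Lemma exp_ge0 y : 0 <= exp y. Proof. exact: (Rlt_le _ _ (exp_pos y)). Qed.

Section Mgf.
Variable n : nat.
Notation T := ('I_n * 'I_n * 'I_n)%type.

Lemma sumT (i : 'I_n) (H : 'I_n -> 'I_n -> R) :
  \big[Rplus/R0]_(t : T) (if t.1.1 == i then H t.1.2 t.2 else 0) =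
  \big[Rplus/R0]_j \big[Rplus/R0]_k H j k.
Proof.
rewrite -(pair_bigA _ (fun ij k => if ij.1 == i then H ij.2 k else 0)) /=.
rewrite -(pair_bigA _ (fun i' j => \big[Rplus/R0]_k (if i' == i then H j k else 0))) /=.
rewrite (bigD1 i) //= [X in Rplus _ X]big1 => [|i' /negbTE ->]; last first.
  by rewrite big1 //= => j _; rewrite big1.
rewrite Rplus_comm Rplus_0_l.
by apply: eq_bigr => j _; apply: eq_bigr => k _; rewrite eqxx.
Qed.

Lemma mgf (pr : T -> R) (pr01 : forall t, 0 <= pr t <= 1) (i : 'I_n)
  (x qv : 'I_n -> 'I_n -> R) lam :
  (forall j k, pr (i, j, k) = 0 -> x j k = 0) ->
  (forall j k, 0 < pr (i, j, k) < 1 -> Rabs (lam * x j k) <= pr (i, j, k) /\ 1 <= pr (i, j, k) * qv j k) ->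
  (forall j k, 0 <= qv j k) ->
  \big[Rplus/R0]_d (sp pr d * exp (lam * \big[Rplus/R0]_j \big[Rplus/R0]_k
      ((if d (i, j, k) then 1 else 0) * Wof (pr (i, j, k)) * x j k)))
  <= exp (lam * \big[Rplus/R0]_j \big[Rplus/R0]_k x j k
          + 2 * lam^2 * \big[Rplus/R0]_j \big[Rplus/R0]_k (x j k ^ 2 * qv j k)).
Proof.
move=> h0 h1 hq.
pose f (t : T) (b : bool) := exp (lam * (if t.1.1 == i then (if b then 1 else 0) * Wof (pr t) * x t.1.2 t.2 else 0)).
have E : forall d : {ffun T -> bool}, exp (lam * \big[Rplus/R0]_j \big[Rplus/R0]_k
      ((if d (i, j, k) then 1 else 0) * Wof (pr (i, j, k)) * x j k)) = \big[Rmult/R1]_t f t (d t).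
  move=> d; rewrite /f -exp_sum; f_equal.
  rewrite -(sumT i (fun j k => (if d (i, j, k) then 1 else 0) * Wof (pr (i, j, k)) * x j k)).
  rewrite big_distrr; apply: eq_bigr => [[[i' j] k]] _ /=.
  by case: eqP => [->|_] //; rewrite Rmult_0_r.
under eq_bigr do rewrite E.
rewrite factor //.
pose g (t : T) := if t.1.1 == i then lam * x t.1.2 t.2 + 2 * lam^2 * (x t.1.2 t.2 ^ 2 * qv t.1.2 t.2) else 0.
apply: Rle_trans (_ : \big[Rmult/R1]_t exp (g t) <= _).
  apply: prod_le => t; rewrite /f /g.
  have hp := pr01 t.
  split.
    apply: Rplus_le_le_0_compat; apply: Rmult_le_pos; try lra; apply: exp_ge0.
  case: eqP => [ei|_]; last by rewrite !Rmult_0_r exp_0; lra.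
  move: hp; case: t ei => [[i' j] k] /= -> hp.
  rewrite Rmult_1_l !Rmult_0_l Rmult_0_r exp_0 Rmult_1_r.
  rewrite (_ : 2 * lam ^ 2 * (x j k ^ 2 * qv j k) = 2 * lam ^ 2 * x j k ^ 2 * qv j k); last ring.
  apply: bern => //; [exact: h0| exact: h1].
rewrite -exp_sum; apply: exp_le_exp_compat; right.
rewrite /g (sumT i (fun j k => lam * x j k + 2 * lam ^ 2 * (x j k ^ 2 * qv j k))).
rewrite !big_distrr -big_split /=; apply: eq_bigr => j _.
by rewrite !big_distrr -big_split.
Qed.
End Mgf.


Section Aux.
Variable I : finType.
Lemma sum_sub (F G : I -> R) : \big[Rplus/R0]_i F i - \big[Rplus/R0]_i G i = \big[Rplus/R0]_i (F i - G i).
Proof.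
suff : \big[Rplus/R0]_i (F i - G i) + \big[Rplus/R0]_i G i = \big[Rplus/R0]_i F i by lra.
rewrite -big_split; apply: eq_bigr => i _ /=; ring.
Qed.

Lemma sum_abs (F : I -> R) : Rabs (\big[Rplus/R0]_i F i) <= \big[Rplus/R0]_i Rabs (F i).
Proof.
apply: (big_ind2 (fun a b => Rabs a <= b)); first by rewrite Rabs_R0; lra.
  move=> x1 x2 y1 y2 h1 h2; have := Rabs_triang x1 y1; lra.
move=> i _; lra.
Qed.

Lemma sum_mul_sep (F G : I -> R) :
  \big[Rplus/R0]_j \big[Rplus/R0]_k (F j * G k) = \big[Rplus/R0]_j F j * \big[Rplus/R0]_k G k.
Proof. rewrite big_distrl; apply: eq_bigr => j _ /=; by rewrite big_distrr. Qed.
End Aux.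

Lemma sq_sum1 n (v : 'I_n -> R) : vnorm v = 1 -> \big[Rplus/R0]_i (v i)^2 = 1.
Proof.
rewrite /vnorm => h.
have h0 : 0 <= \big[Rplus/R0]_i (v i)^2 by apply: sum_ge0 => i; apply: pow2_ge_0.
rewrite -(sqrt_sqrt _ h0) h; ring.
Qed.

Lemma le_w t y z : 0 <= t -> Rabs y <= 2 * t^2 -> Rabs z <= 2 * t^2 -> y^2 <= 1 -> z^2 <= 1 ->
  Rabs (y * z) <= 4 * t^3.
Proof.
move=> ht hy hz hy1 hz1; rewrite Rabs_mult.
have ay := Rabs_pos y; have az := Rabs_pos z.
have y1 : Rabs y <= 1.
  rewrite -(Rabs_R1); apply: Rsqr_le_abs_0; rewrite /Rsqr; lra.
have z1 : Rabs z <= 1.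
  rewrite -(Rabs_R1); apply: Rsqr_le_abs_0; rewrite /Rsqr; lra.
destruct (Rle_or_lt t 1).
  have : Rabs y * Rabs z <= (2 * t^2) * (2 * t^2) by apply: Rmult_le_compat.
  have -> : (2 * t^2) * (2 * t^2) = 4 * t^4 by ring.
  have : t^4 <= t^3.
    have h3 : 0 <= t^3 by apply: pow_le.
    rewrite (_ : t^4 = t^3 * t); [nra|ring].
  lra.
have h2 : 1 <= t^2 by nra.
have : 1 <= t^3 by rewrite (_ : t^3 = t^2 * t); [nra|ring].
have : Rabs y * Rabs z <= 1 * 1 by apply: Rmult_le_compat.
lra.
Qed.

Lemma inv_ge0 x : 0 <= x -> 0 <= / x.
Proof. case/Rle_lt_or_eq_dec => [h|<-]; [apply/Rlt_le/Rinv_0_lt_compat/h| rewrite Rinv_0; lra]. Qed.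

Lemma w32_ge0 n r (Ustar : 'I_n -> 'I_r -> R) i : 0 <= w32 Ustar i.
Proof. rewrite /w32; apply: pow_le; apply: sqrt_pos. Qed.

Lemma pijk_ge0 n r (Ustar : 'I_n -> 'I_r -> R) i j k : 0 <= pijk Ustar i j k.
Proof.
rewrite /pijk /Rdiv; apply: Rmult_le_pos.
  have := w32_ge0 Ustar i; have := w32_ge0 Ustar j; have := w32_ge0 Ustar k; nra.
apply: inv_ge0; have := pos_INR n; have := pow2_ge_0 (Ssum Ustar); nra.
Qed.

Lemma phat01 n r (Ustar : 'I_n -> 'I_r -> R) m i j k : 0 <= m -> 0 <= phat Ustar m i j k <= 1.
Proof.
move=> hm; rewrite /phat; split; last exact: Rmin_r.
apply: Rmin_glb; last lra.
have := pijk_ge0 Ustar i j k; nra.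
Qed.

Definition ptf n r (Ustar : 'I_n -> 'I_r -> R) m (t : 'I_n * 'I_n * 'I_n) :=
  phat Ustar m t.1.1 t.1.2 t.2.

Lemma Prob_PG n r (Ustar : 'I_n -> 'I_r -> R) m E : Prob Ustar m E = PG (ptf Ustar m) E.
Proof.
rewrite /Prob /PG; apply: eq_bigr => d _.
have -> : sample_prob Ustar m d = sp (ptf Ustar m) d.
  by rewrite /sample_prob /sp; apply: eq_bigr => [[[i j] k]] _.
by [].
Qed.

Lemma abs_prod_le y z : Rabs (y * z) <= (y^2 + z^2) / 2.
Proof.
rewrite Rabs_mult.
have e1 : y^2 = Rabs y * Rabs y by rewrite /= Rmult_1_r -Rabs_mult Rabs_pos_eq //; nra.
have e2 : z^2 = Rabs z * Rabs z by rewrite /= Rmult_1_r -Rabs_mult Rabs_pos_eq //; nra.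
rewrite e1 e2; have := pow2_ge_0 (Rabs y - Rabs z); nra.
Qed.

Lemma xb al u1 u2 g h w1 w2 : Rabs al <= 1 -> 0 <= u1 <= 4 * w1 -> 0 <= u2 <= 4 * w2 ->
  Rabs g <= 4 * w1 -> Rabs h <= 4 * w2 ->
  Rabs (al * u1 * u2 - g * h) <= 32 * (w1 * w2) /\
  (al * u1 * u2 - g * h)^2 <= 32 * (w1 * w2) * (u1 * u2 + Rabs g * Rabs h).
Proof.
move=> ha [u10 u11] [u20 u21] hg hh.
have ga := Rabs_pos g; have ha' := Rabs_pos h; have aa := Rabs_pos al.
have uu : u1 * u2 <= 16 * (w1 * w2).
  have := Rmult_le_compat _ _ _ _ u10 u20 u11 u21; lra.
have gh : Rabs g * Rabs h <= 16 * (w1 * w2).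
  have := Rmult_le_compat _ _ _ _ ga ha' hg hh; lra.
have uu0 : 0 <= u1 * u2 by nra.
split.
  apply: Rle_trans (Rabs_triang _ _) _; rewrite Rabs_Ropp !Rabs_mult (Rabs_pos_eq u1) // (Rabs_pos_eq u2) //.
  have : Rabs al * u1 * u2 <= 1 * (u1 * u2) by rewrite Rmult_assoc; apply: Rmult_le_compat_r; lra.
  lra.
have e1 : (al * u1 * u2 - g * h)^2 <= 2 * (u1 * u2)^2 + 2 * (Rabs g * Rabs h)^2.
  have : (al * u1 * u2)^2 <= (u1 * u2)^2.
    rewrite (_ : (al * u1 * u2)^2 = al^2 * (u1 * u2)^2); last ring.
    have : al^2 <= 1.
      have : al^2 = Rabs al * Rabs al by rewrite /= Rmult_1_r -Rabs_mult Rabs_pos_eq //; nra.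
      nra.
    have := pow2_ge_0 (u1 * u2); nra.
  have : (g * h)^2 = (Rabs g * Rabs h)^2.
    by rewrite -Rabs_mult /= !Rmult_1_r -Rabs_mult Rabs_pos_eq //; nra.
  have := pow2_ge_0 (al * u1 * u2 + g * h); move=> *.
  nra.
have e2 : (u1 * u2)^2 <= 16 * (w1 * w2) * (u1 * u2).
  rewrite /= Rmult_1_r; apply: Rmult_le_compat_r => //.
have e3 : (Rabs g * Rabs h)^2 <= 16 * (w1 * w2) * (Rabs g * Rabs h).
  rewrite /= Rmult_1_r; apply: Rmult_le_compat_r => //; nra.
lra.
Qed.

Section Prob2.
Variables (n r : nat) (Ustar U : 'I_n -> 'I_r -> R) (q : 'I_r) (a b : 'I_n -> R) (m : R).

Definition xjk (j k : 'I_n) :=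
  colinner U q a * colinner U q b * (U j q)^2 * (U k q)^2 - U j q * U k q * a j * b k.

Definition numf (i j k : 'I_n) :=
  w32 Ustar i * w32 Ustar j + w32 Ustar j * w32 Ustar k + w32 Ustar k * w32 Ustar i.

Definition Zf (d : sample n) (i : 'I_n) :=
  \big[Rplus/R0]_j \big[Rplus/R0]_k
     ((if d (i, j, k) then 1 else 0) * Wof (ptf Ustar m (i, j, k)) * xjk j k).

Lemma Z_eq d i : colinner U q a * colinner U q b * Bdiag Ustar m U q d i
         - Rdiag Ustar m U q a b d i = Zf d i.
Proof.
rewrite /Bdiag /Rdiag big_distrr sum_sub; apply: eq_bigr => j _.
rewrite big_distrr sum_sub; apply: eq_bigr => k _.
rewrite /xjk /delta /Wgt /ptf /Wof /=; ring.
Qed.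

Lemma sumx0 : \big[Rplus/R0]_(i : 'I_n) (U i q)^2 = 1 ->
  \big[Rplus/R0]_j \big[Rplus/R0]_k xjk j k = 0.
Proof.
move=> hU.
have -> : \big[Rplus/R0]_j \big[Rplus/R0]_k xjk j k =
  \big[Rplus/R0]_j \big[Rplus/R0]_k ((colinner U q a * colinner U q b * (U j q)^2) * (U k q)^2)
  - \big[Rplus/R0]_j \big[Rplus/R0]_k ((U j q * a j) * (U k q * b k)).
  rewrite sum_sub; apply: eq_bigr => j _; rewrite sum_sub; apply: eq_bigr => k _; rewrite /xjk; ring.
rewrite !sum_mul_sep -big_distrr hU /colinner; simpl; ring.
Qed.
End Prob2.


Lemma sum_abs_prod n (y z : 'I_n -> R) : \big[Rplus/R0]_j (y j)^2 = 1 -> \big[Rplus/R0]_j (z j)^2 = 1 ->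
  \big[Rplus/R0]_j Rabs (y j * z j) <= 1.
Proof.
move=> hy hz.
apply: Rle_trans (sum_le (fun j => abs_prod_le (y j) (z j))) _.
rewrite /Rdiv -big_distrl big_split /= hy hz; lra.
Qed.

Lemma colinner_le n r (U : 'I_n -> 'I_r -> R) q a : \big[Rplus/R0]_j (U j q)^2 = 1 ->
  \big[Rplus/R0]_j (a j)^2 = 1 -> Rabs (colinner U q a) <= 1.
Proof.
move=> h1 h2; apply: Rle_trans (sum_abs _) _; exact: sum_abs_prod.
Qed.

Lemma w_facts n r (Ustar : 'I_n -> 'I_r -> R) (y z : R) j :
  Rabs y <= 2 * rownorm Ustar j -> Rabs z <= 2 * rownorm Ustar j -> y^2 <= 1 -> z^2 <= 1 ->
  Rabs (y * z) <= 4 * w32 Ustar j.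
Proof.
move=> hy hz h1 h2; rewrite /w32.
have t0 := sqrt_pos (rownorm Ustar j).
have e : rownorm Ustar j = (sqrt (rownorm Ustar j))^2.
  by rewrite /= Rmult_1_r sqrt_sqrt //; apply: sqrt_pos.
rewrite e in hy hz; exact: le_w.
Qed.

Lemma tail n r (Ustar U : 'I_n -> 'I_r -> R) q (a b : 'I_n -> R) gamma m (i : 'I_n) sg :
  (1 < n)%N ->
  \big[Rplus/R0]_j (U j q)^2 = 1 ->
  (forall j l, Rabs (U j l) <= 2 * rownorm Ustar j) ->
  \big[Rplus/R0]_j (a j)^2 = 1 -> \big[Rplus/R0]_j (b j)^2 = 1 ->
  (forall j, Rabs (a j) <= 2 * rownorm Ustar j) ->
  (forall j, Rabs (b j) <= 2 * rownorm Ustar j) ->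
  0 < gamma <= 1 -> 0 < Ssum Ustar ->
  m >= 15360 / gamma^2 * INR n * ln (INR n) * (Ssum Ustar)^2 ->
  sg = 1 \/ sg = -1 ->
  PG (ptf Ustar m) (fun d => gamma <= sg * Zf Ustar U q a b m d i) <= / INR n ^ 10.
Proof.
move=> n2 sU hUb sa sb hab hbb hg Spos hm hsg.
have INn2 : 2 <= INR n by apply: (le_INR 2); apply/leP.
have lnpos : 0 < ln (INR n) by rewrite -ln_1; apply: ln_increasing; lra.
have S2 : 0 < Ssum Ustar ^ 2 by apply: pow_lt.
have Dpos : 0 < 3 * INR n * Ssum Ustar ^ 2 by apply: Rmult_lt_0_compat => //; lra.
have g2 : 0 < gamma ^ 2 by apply: pow_lt; lra.
have g21 : gamma ^ 2 <= 1 by rewrite /= Rmult_1_r; nra.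
have hm' : 15360 * INR n * ln (INR n) * Ssum Ustar ^ 2 <= gamma^2 * m.
  have e : gamma^2 * (15360 / gamma^2 * INR n * ln (INR n) * Ssum Ustar ^ 2) =
       15360 * INR n * ln (INR n) * Ssum Ustar ^ 2 by field; lra.
  rewrite -e; apply: Rmult_le_compat_l; lra.
have P0 : 0 < 15360 * INR n * ln (INR n) * Ssum Ustar ^ 2.
  apply: Rmult_lt_0_compat => //; apply: Rmult_lt_0_compat => //; lra.
have mpos : 0 < m by nra.
have m0 : 0 <= m by lra.
have pr01 : forall t, 0 <= ptf Ustar m t <= 1 by move=> t; apply: phat01.
set D := 3 * INR n * Ssum Ustar ^ 2 in Dpos hm' P0 *.
set s := 64 * D / m.
have spos : 0 < s by rewrite /s; apply: Rmult_lt_0_compat; [lra| apply: Rinv_0_lt_compat].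
set lam := gamma / (4 * s).
have lpos : 0 < lam by rewrite /lam; apply: Rmult_lt_0_compat; [lra| apply: Rinv_0_lt_compat; lra].
have U1 : forall j, (U j q)^2 <= 1 by move=> j; rewrite -sU; apply: (term_le_sum j) => k; apply: pow2_ge_0.
have a1 : forall j, (a j)^2 <= 1 by move=> j; rewrite -sa; apply: (term_le_sum j) => k; apply: pow2_ge_0.
have b1 : forall j, (b j)^2 <= 1 by move=> j; rewrite -sb; apply: (term_le_sum j) => k; apply: pow2_ge_0.
have uw : forall j, 0 <= (U j q)^2 <= 4 * w32 Ustar j.
  move=> j; split; first by apply: pow2_ge_0.
  have := w_facts (hUb j q) (hUb j q) (U1 j) (U1 j).
  rewrite /= Rmult_1_r; have := Rle_abs (U j q * U j q); lra.
have gw : forall j, Rabs (U j q * a j) <= 4 * w32 Ustar j.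
  by move=> j; apply: w_facts.
have hw : forall j, Rabs (U j q * b j) <= 4 * w32 Ustar j.
  by move=> j; apply: w_facts.
have al1 : Rabs (colinner U q a * colinner U q b) <= 1.
  rewrite Rabs_mult; have := colinner_le sU sa; have := colinner_le sU sb.
  have := Rabs_pos (colinner U q a); have := Rabs_pos (colinner U q b); nra.
have XB : forall j k, Rabs (xjk U q a b j k) <= 32 * (w32 Ustar j * w32 Ustar k) /\
   (xjk U q a b j k)^2 <= 32 * (w32 Ustar j * w32 Ustar k) *
      ((U j q)^2 * (U k q)^2 + Rabs (U j q * a j) * Rabs (U k q * b k)).
  move=> j k; rewrite /xjk (_ : U j q * U k q * a j * b k = (U j q * a j) * (U k q * b k)); last ring.
  by apply: xb.
have wnum : forall j k, w32 Ustar j * w32 Ustar k <= numf Ustar i j k.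
  move=> j k; rewrite /numf.
  have := w32_ge0 Ustar i; have := w32_ge0 Ustar j; have := w32_ge0 Ustar k; nra.
have wjk0 : forall j k, 0 <= w32 Ustar j * w32 Ustar k.
  move=> j k; apply: Rmult_le_pos; apply: w32_ge0.
have ptfE : forall j k, ptf Ustar m (i, j, k) = Rmin (m * (numf Ustar i j k / D)) 1 by [].
pose qv j k := D / (m * numf Ustar i j k).
have h0 : forall j k, ptf Ustar m (i, j, k) = 0 -> xjk U q a b j k = 0.
  move=> j k; rewrite ptfE /Rmin; case: Rle_dec => _ h; last lra.
  have : numf Ustar i j k = 0.
    have hD : 0 < / D by apply: Rinv_0_lt_compat.
    rewrite /Rdiv in h; case: (Rmult_integral _ _ h) => h'; first lra.
    by case: (Rmult_integral _ _ h') => h''; [|have := hD; rewrite h''; lra].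
  move=> hn; have := XB j k; have := wnum j k; have := wjk0 j k; rewrite hn.
  move=> ? ? [hx _]; have := Rabs_pos (xjk U q a b j k).
  move: hx; rewrite /Rabs; case: Rcase_abs => ? ? ?; lra.
have h1 : forall j k, 0 < ptf Ustar m (i, j, k) < 1 ->
    Rabs (lam * sg * xjk U q a b j k) <= ptf Ustar m (i, j, k) /\ 1 <= ptf Ustar m (i, j, k) * qv j k.
  move=> j k; rewrite ptfE /Rmin; case: Rle_dec => _ [hp1 hp2]; last lra.
  have nump : 0 < numf Ustar i j k.
    have hD : 0 < / D by apply: Rinv_0_lt_compat.
    have := wnum j k; have := wjk0 j k; rewrite /Rdiv in hp1 *.
    destruct (Rle_lt_or_eq_dec _ _ (Rle_trans _ _ _ (wjk0 j k) (wnum j k))) as [|e]; first lra.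
    by move: hp1; rewrite -e Rmult_0_l Rmult_0_r; lra.
  split; last first.
    rewrite /qv; right; field; split; lra.
  rewrite (Rabs_mult (lam * sg)) (Rabs_mult lam sg) (Rabs_pos_eq lam); last lra.
  have -> : Rabs sg = 1 by case: hsg => ->; rewrite ?Rabs_R1 // Rabs_Ropp Rabs_R1.
  have [hx _] := XB j k.
  have : lam * 1 * Rabs (xjk U q a b j k) <= lam * (32 * numf Ustar i j k).
    rewrite Rmult_1_r; apply: Rmult_le_compat_l; first lra.
    have := wnum j k; lra.
  have -> : lam * (32 * numf Ustar i j k) = gamma * (m * (numf Ustar i j k / D)) / 8.
    rewrite /lam /s; field; split; lra.
  have : 0 <= m * (numf Ustar i j k / D) by lra.
  move=> *; nra.
have hq : forall j k, 0 <= qv j k.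
  move=> j k; rewrite /qv /Rdiv; apply: Rmult_le_pos; first lra.
  apply: inv_ge0; apply: Rmult_le_pos => //; rewrite /numf.
  have := w32_ge0 Ustar i; have := w32_ge0 Ustar j; have := w32_ge0 Ustar k; nra.
have hV : \big[Rplus/R0]_j \big[Rplus/R0]_k (xjk U q a b j k ^ 2 * qv j k) <= s.
  pose K j k := (U j q)^2 * (U k q)^2 + Rabs (U j q * a j) * Rabs (U k q * b k).
  have K0 : forall j k, 0 <= K j k.
    move=> j k; rewrite /K; apply: Rplus_le_le_0_compat.
      by apply: Rmult_le_pos; apply: pow2_ge_0.
    by apply: Rmult_le_pos; apply: Rabs_pos.
  apply: Rle_trans (_ : \big[Rplus/R0]_j \big[Rplus/R0]_k ((32 * D / m) * K j k) <= _).
    apply: sum_le => j; apply: sum_le => k.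
    have [_ hx2] := XB j k.
    have hx2' : xjk U q a b j k ^ 2 <= 32 * numf Ustar i j k * K j k.
      apply: Rle_trans hx2 _; rewrite -/(K j k).
      apply: Rmult_le_compat_r => //; have := wnum j k; lra.
    have num0 : 0 <= numf Ustar i j k.
      have := wnum j k; have := wjk0 j k; lra.
    have x20 := pow2_ge_0 (xjk U q a b j k).
    have R0' : 0 <= 32 * D / m * K j k.
      apply: Rmult_le_pos => //; rewrite /Rdiv; apply: Rmult_le_pos; [lra|].
      apply/Rlt_le/Rinv_0_lt_compat; lra.
    case: (Rle_lt_or_eq_dec _ _ num0) => hn.
      apply: Rle_trans (_ : (32 * numf Ustar i j k * K j k) * qv j k <= _).
        by apply: Rmult_le_compat_r => //.
      by right; rewrite /qv; field; split; lra.
    by rewrite /qv -hn Rmult_0_r /Rdiv Rinv_0 !Rmult_0_r.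
  have -> : \big[Rplus/R0]_j \big[Rplus/R0]_k ((32 * D / m) * K j k) =
      (32 * D / m) * (\big[Rplus/R0]_j \big[Rplus/R0]_k ((U j q)^2 * (U k q)^2)
          + \big[Rplus/R0]_j \big[Rplus/R0]_k (Rabs (U j q * a j) * Rabs (U k q * b k))).
    rewrite -big_split big_distrr; apply: eq_bigr => j _ /=.
    rewrite -big_split big_distrr; apply: eq_bigr => k _ /=.
    by rewrite /K.
  rewrite !sum_mul_sep sU.
  set A := \big[Rplus/R0]_(j < n) Rabs (U j q * a j).
  set B := \big[Rplus/R0]_(k < n) Rabs (U k q * b k).
  have hA : 0 <= A <= 1 by split; [apply: sum_ge0 => j; apply: Rabs_pos | apply: sum_abs_prod].
  have hB : 0 <= B <= 1 by split; [apply: sum_ge0 => j; apply: Rabs_pos | apply: sum_abs_prod].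
  have c0 : 0 < 32 * D / m.
    rewrite /Rdiv; apply: Rmult_lt_0_compat; [lra|]; apply/Rinv_0_lt_compat; lra.
  have -> : s = 32 * D / m * 2 by rewrite /s; field; lra.
  have : A * B <= 1 by nra.
  move=> hAB; apply: Rmult_le_compat_l; lra.
have M := @mgf n (ptf Ustar m) pr01 i (xjk U q a b) qv (lam * sg) h0 h1 hq.
apply: Rle_trans (markov pr01 (fun d => sg * Zf Ustar U q a b m d i) gamma (Rlt_le _ _ lpos)) _.
rewrite (_ : \big[Rplus/R0]_d (sp (ptf Ustar m) d * exp (lam * (sg * Zf Ustar U q a b m d i))) =
   \big[Rplus/R0]_d (sp (ptf Ustar m) d * exp ((lam * sg) * Zf Ustar U q a b m d i))); last first.
  by apply: eq_bigr => d _; rewrite Rmult_assoc.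
apply: Rle_trans (Rmult_le_compat_l _ _ _ (Rlt_le _ _ (exp_pos _)) M) _.
rewrite sumx0 // Rmult_0_r Rplus_0_l -exp_plus.
have -> : (lam * sg)^2 = lam^2 by case: hsg => ->; ring.
have e10 : / INR n ^ 10 = exp (- (10 * ln (INR n))).
  rewrite exp_Ropp (_ : 10 * ln (INR n) = INR 10 * ln (INR n)); last by simpl; ring.
  rewrite -ln_pow; last lra.
  rewrite exp_ln //; apply: pow_lt; lra.
rewrite e10; apply: exp_le_exp_compat.
have l2 : 0 <= lam^2 by apply: pow2_ge_0.
apply: Rle_trans (_ : - (lam * gamma) + 2 * lam^2 * s <= _).
  have : 2 * lam ^ 2 * \big[Rplus/R0]_j \big[Rplus/R0]_k (xjk U q a b j k ^ 2 * qv j k) <= 2 * lam^2 * s.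
    apply: Rmult_le_compat_l => //; lra.
  lra.
have -> : - (lam * gamma) + 2 * lam^2 * s = - (gamma^2 * m / (512 * D)).
  rewrite /lam /s; field; split; lra.
have : 10 * ln (INR n) * (512 * D) <= gamma ^ 2 * m.
  apply: Rle_trans hm'; rewrite /D; right; ring.
move=> h; apply: Ropp_le_contravar.
apply: (Rmult_le_reg_r (512 * D)); first lra.
have -> : gamma ^ 2 * m / (512 * D) * (512 * D) = gamma ^ 2 * m by field; lra.
lra.
Qed.


Theorem mainTheorem8 :
  exists C : R, 0 < C /\
  forall (n r : nat) (Ustar U : 'I_n -> 'I_r -> R) (q : 'I_r)
         (a b c : 'I_n -> R) (gamma m : R),
    orthonormal_cols Ustar ->
    (forall l : 'I_r, \big[Rplus/R0]_(i : 'I_n) (U i l)^2 = 1) ->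
    (forall (i : 'I_n) (l : 'I_r), Rabs (U i l) <= 2 * rownorm Ustar i) ->
    vnorm a = 1 -> vnorm b = 1 -> vnorm c = 1 ->
    (forall i : 'I_n, Rabs (a i) <= 2 * rownorm Ustar i) ->
    (forall i : 'I_n, Rabs (b i) <= 2 * rownorm Ustar i) ->
    (forall i : 'I_n, Rabs (c i) <= 2 * rownorm Ustar i) ->
    0 < gamma <= 1 ->
    m >= C / gamma^2 * INR n * ln (INR n) * (Ssum Ustar)^2 ->
    Prob Ustar m (fun d =>
      vnorm (fun i : 'I_n =>
        (colinner U q a * colinner U q b * Bdiag Ustar m U q d i
         - Rdiag Ustar m U q a b d i) * c i)
      <= gamma * vnorm b)
    >= 1 - 2 * / (INR n ^ 9).
Proof.
exists 15360; split; first lra.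
move=> n r Ustar U q a b c gamma m _ hU hUb ha hb hc hab hbb _ hg hm.
have sa := sq_sum1 ha; have sb := sq_sum1 hb; have sc := sq_sum1 hc.
have sU := hU q.
pose rho i := rownorm Ustar i.
pose w i := w32 Ustar i.
pose S := Ssum Ustar.
have rho0 : forall i, 0 <= rho i by move=> i; apply: sqrt_pos.
have wE : forall i, w i = (sqrt (rho i))^3 by [].
have w0 : forall i, 0 <= w i by move=> i; rewrite wE; apply: pow_le; apply: sqrt_pos.
have rhoE : forall i, rho i = (sqrt (rho i))^2 by move=> i; rewrite /= Rmult_1_r sqrt_sqrt.
have S0 : 0 <= S by apply: sum_ge0.
have [i0 hi0] : exists i, a i <> 0.
  apply: NNPP => hn.
  have : \big[Rplus/R0]_i (a i)^2 = 0.
    rewrite big1 // => i _; have : a i = 0 by apply: NNPP => h; apply: hn; exists i.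
    by move=> ->; rewrite /= Rmult_0_l.
  lra.
have n1 : (0 < n)%N := leq_ltn_trans (leq0n i0) (ltn_ord i0).
have INn1 : 1 <= INR n by apply: (le_INR 1); apply/leP.
have lnn : 0 <= ln (INR n).
  rewrite -ln_1; case: (Rle_lt_or_eq_dec _ _ INn1) => h; [left; apply: ln_increasing; lra| rewrite h; lra].
have rhoi0 : 0 < rho i0.
  have := hab i0; have := Rabs_pos_lt _ hi0; rewrite /rho; lra.
have wi0 : 0 < w i0.
  rewrite wE; apply: pow_lt; apply: sqrt_lt_R0; lra.
have Spos : 0 < S.
  apply: (Rlt_le_trans _ _ _ wi0); exact: (term_le_sum i0 w0).
have hg2 : 0 < gamma^2 by apply: pow_lt; lra.
have m0 : 0 <= m.
  suff : 0 <= 15360 / gamma ^ 2 * INR n * ln (INR n) * Ssum Ustar ^ 2 by lra.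
  apply: Rmult_le_pos; last by apply: pow_le.
  apply: Rmult_le_pos => //; apply: Rmult_le_pos; last lra.
  apply: Rmult_le_pos; [lra | apply: Rlt_le; apply: Rinv_0_lt_compat; lra].
have pr01 : forall t, 0 <= ptf Ustar m t <= 1 by move=> t; apply: phat01.
rewrite Prob_PG.
case: (ltnP 1 n) => hn; last first.
  have e1 : n = 1%N by apply/eqP; rewrite eqn_leq hn n1.
  have hI : INR n = 1 by rewrite e1.
  rewrite hI; apply: Rle_ge; apply: Rle_trans (PG_ge0 pr01 _).
  rewrite /= !Rmult_1_r Rinv_1; lra.
rewrite PG_compl.
suff : PG (ptf Ustar m) (fun d => ~ vnorm (fun i : 'I_n =>
        (colinner U q a * colinner U q b * Bdiag Ustar m U q d i
         - Rdiag Ustar m U q a b d i) * c i) <= gamma * vnorm b) <= 2 * / INR n ^ 9 by lra.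
apply: Rle_trans (PG_le pr01 (F := fun d => exists i, gamma <= 1 * Zf Ustar U q a b m d i \/
   gamma <= -1 * Zf Ustar U q a b m d i) _) _.
  move=> d hbad; apply: NNPP => hno; apply: hbad.
  have hz : forall i, (Zf Ustar U q a b m d i)^2 <= gamma^2.
    move=> i; have : ~ (gamma <= 1 * Zf Ustar U q a b m d i \/ gamma <= -1 * Zf Ustar U q a b m d i).
      by move=> h; apply: hno; exists i.
    move=> h; have h1 : Zf Ustar U q a b m d i < gamma by apply: Rnot_le_lt => h'; apply: h; left; lra.
    have h2 : - Zf Ustar U q a b m d i < gamma by apply: Rnot_le_lt => h'; apply: h; right; lra.
    have : 0 <= (gamma - Zf Ustar U q a b m d i) * (gamma + Zf Ustar U q a b m d i) by apply: Rmult_le_pos; lra.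
    simpl; nra.
  rewrite hb Rmult_1_r /vnorm (eq_bigr (fun i => (Zf Ustar U q a b m d i * c i)^2)); last first.
    by move=> i _; rewrite Z_eq.
  rewrite -(sqrt_pow2 gamma); last lra.
  apply: sqrt_le_1_alt.
  apply: Rle_trans (_ : \big[Rplus/R0]_i (gamma^2 * (c i)^2) <= _).
    apply: sum_le => i; rewrite Rpow_mult_distr; apply: Rmult_le_compat_r; [apply: pow2_ge_0|apply: hz].
  rewrite -big_distrr sc; simpl; lra.
apply: Rle_trans (PG_union pr01 _) _.
apply: (Rle_trans _ (\big[Rplus/R0]_(i : 'I_n) (2 * / INR n ^ 10))).
  apply: sum_le => i; apply: Rle_trans (PG_or pr01 _ _) _.
  have t1 := tail i hn sU hUb sa sb hab hbb hg Spos hm (or_introl erefl).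
  have t2 := tail i hn sU hUb sa sb hab hbb hg Spos hm (or_intror erefl).
  apply: Rle_trans (Rplus_le_compat _ _ _ _ t1 t2) _; lra.
rewrite sum_const_R card_ord.
have : 0 < INR n by lra.
move=> hn0; right; field; lra.
Qed.
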